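(* Fix $t,x$. Let $H(t,x,\cdot):\mathbb{R}^N\to\mathbb{R}$ be real-valued and convex, let $U(t)$ be a nonempty subset of $\mathbb{R}^M$, let $f(t,x,\cdot):\mathbb{R}^M\to\mathbb{R}^N$ be such that $f(t,x,U(t))$ is closed and convex, and let $l(t,x,\cdot):\mathbb{R}^M\to\mathbb{R}$. If $H(t,x,p)=\sup_{u\in U(t)}\{\langle p,f(t,x,u)\rangle-l(t,x,u)\}$ for all $p\in\mathbb{R}^N$, then $$\mathrm{dom}\,H^*(t,x,\cdot)=f(t,x,U(t)).$$
   Context: $H^*(t,x,v)=\sup_{p\in\mathbb{R}^N}\{\langle v,p\rangle-H(t,x,p)\}\in\mathbb{R}\cup\{+\infty\}$ is the Legendre–Fenchel conjugate in the last variable, and $\mathrm{dom}\,H^*(t,x,\cdot)=\{v\in\mathbb{R}^N:H^*(t,x,v)<+\infty\}$. *)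

(* Defs.v *)
From HB Require Import structures.
From mathcomp Require Import all_boot all_order all_algebra.
From mathcomp Require Import all_classical all_reals all_analysis.
Set Implicit Arguments. Unset Strict Implicit. Unset Printing Implicit Defensive.
Import Order.TTheory GRing.Theory Num.Theory.
Import numFieldNormedType.Exports.
Local Open Scope classical_set_scope.
Local Open Scope ring_scope.

Definition dotv (R : realType) (n : nat) (u v : 'rV[R]_n) : R :=
  \sum_(i < n) u ord0 i * v ord0 i.

Definition conj_fun (R : realType) (n : nat) (g : 'rV[R]_n -> R) (v : 'rV[R]_n)
  : \bar R :=
  ereal_sup [set ((dotv v p - g p)%:E) | p in [set: 'rV[R]_n]].

Definition edom (R : realType) (n : nat) (g : 'rV[R]_n -> \bar R) : set 'rV[R]_n :=
  [set v | (g v < +oo)%E].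

(* Main.v *)
Require Import Defs.
From HB Require Import structures.
From mathcomp Require Import all_boot all_order all_algebra.
From mathcomp Require Import all_classical all_reals all_analysis.
From mathcomp Require Import ring lra.
Import Order.TTheory GRing.Theory Num.Theory.
Import numFieldNormedType.Exports.
Local Open Scope classical_set_scope.
Local Open Scope ring_scope.

Section H.
Variables (R : realType) (n : nat).
Implicit Types u v w : 'rV[R]_n.

Lemma dotvC u v : dotv u v = dotv v u.
Proof. by apply: eq_bigr => i _; rewrite mulrC. Qed.

Lemma dotvDl u w v : dotv (u + w) v = dotv u v + dotv w v.
Proof. rewrite /dotv -big_split; apply: eq_bigr => i _; by rewrite mxE mulrDl. Qed.

Lemma dotvNl u v : dotv (- u) v = - dotv u v.
Proof. rewrite /dotv -sumrN; apply: eq_bigr => i _; by rewrite mxE mulNr. Qed.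

Lemma dotvZl a u v : dotv (a *: u) v = a * dotv u v.
Proof. rewrite /dotv mulr_sumr; apply: eq_bigr => i _; by rewrite mxE mulrA. Qed.

Lemma dotvBl u w v : dotv (u - w) v = dotv u v - dotv w v.
Proof. by rewrite dotvDl dotvNl. Qed.

Lemma dotv0l v : dotv 0 v = 0.
Proof. by rewrite -(scale0r (0 : 'rV[R]_n)) dotvZl mul0r. Qed.

Lemma dotvDr u w v : dotv v (u + w) = dotv v u + dotv v w.
Proof. by rewrite !(dotvC v) dotvDl. Qed.
Lemma dotvBr u w v : dotv v (u - w) = dotv v u - dotv v w.
Proof. by rewrite !(dotvC v) dotvBl. Qed.
Lemma dotvZr a u v : dotv v (a *: u) = a * dotv v u.
Proof. by rewrite !(dotvC v) dotvZl. Qed.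

Lemma dotv_ge0 w : 0 <= dotv w w.
Proof. by apply: sumr_ge0 => i _; rewrite -expr2 sqr_ge0. Qed.

Lemma dotv_coord w i : w ord0 i ^+ 2 <= dotv w w.
Proof.
rewrite /dotv (bigD1 i) //= expr2 lerDl; apply: sumr_ge0 => j _.
by rewrite -expr2 sqr_ge0.
Qed.

Lemma dotv_eq0 w : dotv w w = 0 -> w = 0.
Proof.
move=> h; apply/rowP => i; rewrite mxE.
have := dotv_coord w i; rewrite h => h2.
by apply/eqP; rewrite -sqrf_eq0 eq_le h2 sqr_ge0.
Qed.

Lemma norm_le_dotv w : `|w| <= 1 + dotv w w.
Proof.
rewrite [leLHS]/Num.norm /= mx_normrE; apply/bigmax_leP; split.
  by apply: addr_ge0 => //; exact: dotv_ge0.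
move=> [i j] _ /=; rewrite (ord1 i).
have := dotv_coord w j; set a := w ord0 j => h.
apply: le_trans (_ : 1 + a ^+ 2 <= _); last by rewrite lerD2l.
move=> {h}.
case: (lerP `|a| 1) => ha.
  by apply: le_trans ha _; rewrite lerDl sqr_ge0.
rewrite -real_normK ?num_real //; nra.
Qed.

Lemma dotv_cont v : continuous (fun c : 'rV[R]_n => dotv (v - c) (v - c)).
Proof.
rewrite /dotv; apply: continuous_big.
  exact: add_continuous.
move=> i _.
have -> : (fun x : 'rV[R]_n => (v - x) ord0 i * (v - x) ord0 i) =
  (fun x => (v ord0 i - x ord0 i) * (v ord0 i - x ord0 i)).
  by apply: funext => x; rewrite !mxE.
move=> c.
have hc : (fun x : 'rV[R]_n => v ord0 i - x ord0 i) @ c --> v ord0 i - c ord0 i.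
  apply: (@continuousB R R^o _ (fun _ => v ord0 i) (fun x : 'rV[R]_n => x ord0 i) c).
    exact: cst_continuous.
  exact: coord_continuous.
exact: (continuousM hc hc).
Qed.

Lemma expand q w s : dotv (q - s *: w) (q - s *: w) =
  dotv q q - 2 * s * dotv q w + s ^+ 2 * dotv w w.
Proof. rewrite !dotvBl !dotvBr !dotvZl !dotvZr (dotvC w q); ring. Qed.

Lemma sep (C : set 'rV[R]_n) v : closed C ->
  (forall c1 c2 (s : {i01 R}), C c1 -> C c2 -> C (s%:num *: c1 + (1 - s%:num) *: c2)) ->
  C !=set0 -> ~ C v ->
  exists q d, 0 < d /\ forall c, C c -> dotv q c <= dotv q v - d.
Proof.
move=> Ccl Ccvx [c1 Cc1] nCv.
pose e c := dotv (v - c) (v - c).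
pose K := C `&` [set c | e c <= e c1].
have Kcl : closed K.
  apply: closedI => //.
  apply: (@preimage_closed _ _ e [set x | x <= e c1]) => [c _|].
    exact: dotv_cont.
  exact: closed_le.
have Kb : bounded_set K.
  rewrite /= /bounded_near.
  near=> M => c [_ Kc].
  have h1 : `|c| <= `|v| + `|v - c|.
    by have := ler_normB v (v - c); rewrite opprB addrCA subrr addr0.
  apply: (le_trans h1); apply: le_trans (_ : `|v| + (1 + e c) <= _).
    by rewrite lerD2l; exact: norm_le_dotv.
  apply: le_trans (_ : `|v| + (1 + e c1) <= M); first by rewrite !lerD2l.
  near: M; apply: nbhs_pinfty_ge; exact: num_real.
have Kc : compact K := bounded_closed_compact Kb Kcl.
have K0 : K !=set0 by exists c1; split => //; exact: lexx.
have econt : {within K, continuous e}.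
  by apply: continuous_subspaceT => c; exact: dotv_cont.
have [c0 c0K c0min] := compact_EVT_min K0 Kc econt.
move: c0K; rewrite inE => -[Cc0 _].
have gmin : forall c, C c -> e c0 <= e c.
  move=> c Cc; case: (leP (e c) (e c1)) => h.
    by apply: c0min; rewrite inE.
  apply: le_trans (ltW h); apply: c0min; rewrite inE; split => //; exact: lexx.
pose q := v - c0.
have d0 : 0 < e c0.
  rewrite lt_def dotv_ge0 andbT; apply/negP => /eqP /dotv_eq0 /eqP.
  by move=> /eqP /subr0_eq vc0; apply: nCv; rewrite vc0.
exists q, (e c0); split => // c Cc.
have -> : dotv q v - e c0 = dotv q c0.
  by rewrite /e -/q -dotvBr /q opprB addrCA subrr addr0.
rewrite -subr_le0 -dotvBr.
set w := c - c0; set a := dotv q w; set b := dotv w w.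
rewrite leNgt; apply/negP => a0.
have b0 : 0 < b.
  rewrite lt_def dotv_ge0 andbT; apply/negP => /eqP /dotv_eq0 w0.
  by move: a0; rewrite /a w0 dotvC dotv0l ltxx.
pose s := Num.min 1 (a / b).
have s0 : 0 < s by rewrite lt_min ltr01 divr_gt0.
have s1 : s <= 1 by rewrite ge_min lexx.
have sb : s * b <= a.
  by rewrite -ler_pdivlMr // ge_min lexx orbT.
have Cp := Ccvx c c0 (Itv01 (ltW s0) s1) Cc Cc0.
have := gmin _ Cp.
rewrite /= /e.
have -> : v - (s *: c + (1 - s) *: c0) = q - s *: w.
  rewrite /q /w scalerBl scale1r scalerBr; apply/rowP => i; rewrite !mxE; ring.
rewrite expand -/q -/a -/b.
nra.
Unshelve. all: by end_near.
Qed.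
End H.

Theorem lemma3p2 (R : realType) (N M : nat) (t : R) (x : 'rV[R]_N)
  (H : R -> 'rV[R]_N -> 'rV[R]_N -> R)
  (U : R -> set 'rV[R]_M)
  (f : R -> 'rV[R]_N -> 'rV[R]_M -> 'rV[R]_N)
  (l : R -> 'rV[R]_N -> 'rV[R]_M -> R) :
  convex_function [set: 'rV[R]_N] (H t x) ->
  U t !=set0 ->
  closed (f t x @` U t) ->
  convex_set (f t x @` U t) ->
  (forall p : 'rV[R]_N,
     (H t x p)%:E = ereal_sup [set (dotv p (f t x u) - l t x u)%:E | u in U t]) ->
  edom (conj_fun (H t x)) = f t x @` U t.
Proof.
move=> _ [u0 Uu0] Ccl Ccvx Hsup.
have Hlb : forall p u, U t u -> dotv p (f t x u) - l t x u <= H t x p.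
  by move=> p u Uu; rewrite -lee_fin Hsup; apply: ereal_sup_ubound; exists u.
apply/seteqP; split => v.
- rewrite /edom /= => Hv; apply: contrapT => nCv.
  have Cvx' : forall c1 c2 (s : {i01 R}), (f t x @` U t) c1 -> (f t x @` U t) c2 ->
      (f t x @` U t) (s%:num *: c1 + (1 - s%:num) *: c2).
    move=> c1 c2 s h1 h2; have := Ccvx c1 c2 s; rewrite !inE; exact.
  have C0 : (f t x @` U t) !=set0 by exists (f t x u0), u0.
  have [q [d [d0 hq]]] := @sep R N _ v Ccl Cvx' C0 nCv.
  have key : forall lam, 0 <= lam -> ((lam * d - H t x 0)%:E <= conj_fun (H t x) v)%E.
    move=> lam lam0.
    have HB : H t x (lam *: q) <= lam * (dotv q v - d) + H t x 0.
      rewrite -lee_fin Hsup; apply: ge_ereal_sup => _ [u Uu <-]; rewrite lee_fin.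
      have h1 := hq (f t x u) (ex_intro2 _ _ u Uu erefl).
      have h2 := Hlb 0 u Uu; rewrite dotv0l in h2.
      rewrite dotvZl; nra.
    apply: le_trans (_ : ((dotv v (lam *: q) - H t x (lam *: q))%:E <= _)%E).
      rewrite lee_fin dotvZr (@dotvC R N v q); lra.
    by apply: ereal_sup_ubound; exists (lam *: q).
  move: Hv; case E: (conj_fun (H t x) v) => [r| |] // _.
    pose lam := (`|r| + `|H t x 0| + 1) / d.
    have lam0 : 0 <= lam by rewrite divr_ge0 // ?ltW.
    have := key lam lam0; rewrite E lee_fin /lam divfK ?gt_eqF //.
    have := ler_norm r; have := ler_norm (H t x 0); move: (H t x 0) (`|H t x 0|) (`|r|) => a b c; lra.
  have := key 0 (lexx 0); rewrite E; by [].
- case => u Uu <-; rewrite /edom /=.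
  apply: le_lt_trans (ltry (l t x u)).
  apply: ge_ereal_sup => _ [p _ <-]; rewrite lee_fin.
  have := Hlb p u Uu; rewrite (@dotvC R N p); lra.
Qed.
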